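(* Let $\sigma>0$ and $\beta(s):=\exp\Big(-\frac{((\log s-\sigma^{2}/2)_{+})^{2}}{2\sigma^{2}}\Big)$ for $s>0$. Let $K(u)=u\beta(1/u)$ for $u>0$, $K(0)=0$, $K^{*}(v)=\sup_{u\ge0}\{uv-K(u)\}$, and $F(w):=\int_{w}^{1}\frac{\mathrm{d}v}{K^{*}(v)}$ for $w\in(0,1]$, with inverse function $F^{-1}$. Then for all $x>0$, \[ F^{-1}(x)\le2\exp\Big\{-\frac{1}{2\sigma^{2}}\mathsf{W}^{2}\Big(\frac{x\sigma^{2}}{2\exp(\sigma^{2}/2)}\Big)\Big\}, \] where $\mathsf{W}$ is the Lambert W function on $[0,\infty)$ (the inverse of $x\mapsto xe^{x}$) and $\mathsf{W}^{2}$ its square.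
   Context: $(t)_{+}=\max(t,0)$. *)

(* Defs.v *)
From Stdlib Require Import Reals Lra ClassicalEpsilon.
From Coquelicot Require Import Coquelicot.
Open Scope R_scope.

Definition pos_part (t : R) : R := Rmax t 0.

Definition beta (sigma s : R) : R :=
  exp (- ((pos_part (ln s - sigma ^ 2 / 2)) ^ 2) / (2 * sigma ^ 2)).

(* K(u) = u beta(1/u) for u > 0, K(0) = 0 (only used for u >= 0) *)
Definition Kf (sigma u : R) : R :=
  if Rle_dec u 0 then 0 else u * beta sigma (/ u).

Definition Kstar (sigma v : R) : Rbar :=
  Lub_Rbar (fun y => exists u, 0 <= u /\ y = u * v - Kf sigma u).

Definition Ff (sigma w : R) : R :=
  RInt (fun v => / real (Kstar sigma v)) w 1.

Definition Finv (sigma x : R) : R :=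
  epsilon (inhabits 0) (fun w => 0 < w <= 1 /\ Ff sigma w = x).

Definition LambertW (y : R) : R :=
  epsilon (inhabits 0) (fun w => 0 <= w /\ w * exp w = y).

(* Main.v *)
Require Import Defs.
From Stdlib Require Import Reals Lra ClassicalEpsilon.
From Coquelicot Require Import Coquelicot.
Open Scope R_scope.

Section S.
Variable sigma : R.
Hypothesis hs : 0 < sigma.

Definition E (v : R) := fun y => exists u, 0 <= u /\ y = u * v - Kf sigma u.
Definition g (v : R) := real (Kstar sigma v).

Lemma Kf_nonneg u : 0 <= u -> 0 <= Kf sigma u.
Proof.
  intros Hu; unfold Kf; destruct (Rle_dec u 0); [lra|].
  unfold beta; pose proof (exp_pos (- pos_part (ln (/ u) - sigma ^ 2 / 2) ^ 2 / (2 * sigma ^ 2))).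
  nra.
Qed.

Lemma Kf_big u : 1 < u -> Kf sigma u = u.
Proof.
  intros Hu; unfold Kf; destruct (Rle_dec u 0); [lra|].
  unfold beta, pos_part.
  assert (ln (/ u) < 0).
  { rewrite ln_Rinv by lra. pose proof (ln_increasing 1 u). rewrite ln_1 in H. lra. }
  rewrite Rmax_right.
  2:{ pose proof (pow2_ge_0 sigma). lra. }
  replace (- 0 ^ 2 / (2 * sigma ^ 2)) with 0 by (field; lra).
  rewrite exp_0; ring.
Qed.

Lemma Kf_0 : Kf sigma 0 = 0.
Proof. unfold Kf; destruct (Rle_dec 0 0); lra. Qed.

Lemma E_le v y : 0 <= v <= 1 -> E v y -> y <= v.
Proof.
  intros Hv [u [Hu ->]].
  destruct (Rle_lt_dec u 1).
  - pose proof (Kf_nonneg u Hu). nra.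
  - rewrite Kf_big by lra. nra.
Qed.

Lemma Kstar_fin v : 0 <= v <= 1 -> Kstar sigma v = Finite (g v) /\ 0 <= g v <= v.
Proof.
  intros Hv. unfold g, Kstar.
  destruct (Lub_Rbar_correct (E v)) as [Hub Hlub].
  fold (E v). 
  assert (H0 : Rbar_le 0 (Lub_Rbar (E v))).
  { apply Hub. exists 0. rewrite Kf_0. split; [lra|ring]. }
  assert (H1 : Rbar_le (Lub_Rbar (E v)) v).
  { apply Hlub. intros y Hy. simpl. now apply E_le. }
  destruct (Lub_Rbar (E v)); simpl in *; try contradiction.
  split; [reflexivity| lra].
Qed.

Lemma g_ub v y : 0 <= v <= 1 -> E v y -> y <= g v.
Proof.
  intros Hv Hy. destruct (Kstar_fin v Hv) as [Hk _].
  destruct (Lub_Rbar_correct (E v)) as [Hub _].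
  specialize (Hub y Hy). unfold Kstar in Hk. fold (E v) in Hk. rewrite Hk in Hub. exact Hub.
Qed.

Lemma g_lub v b : 0 <= v <= 1 -> (forall y, E v y -> y <= b) -> g v <= b.
Proof.
  intros Hv Hb. destruct (Kstar_fin v Hv) as [Hk _].
  destruct (Lub_Rbar_correct (E v)) as [_ Hlub].
  assert (Rbar_le (Lub_Rbar (E v)) b) by (apply Hlub; intros y Hy; simpl; auto).
  unfold Kstar in Hk. fold (E v) in Hk. rewrite Hk in H. exact H.
Qed.

Lemma g_lip v v' : 0 <= v <= 1 -> 0 <= v' <= 1 -> g v <= g v' + Rabs (v - v').
Proof.
  intros Hv Hv'. apply g_lub; auto.
  intros y [u [Hu ->]].
  pose proof (Kstar_fin v' Hv') as [_ Hg'].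
  pose proof (Rabs_pos (v - v')).
  destruct (Rle_lt_dec u 1).
  - assert (u * v' - Kf sigma u <= g v') by (apply g_ub; auto; exists u; auto).
    assert (u * (v - v') <= Rabs (v - v')).
    { pose proof (Rle_abs (v - v')). destruct (Rle_lt_dec 0 (v - v')); nra. }
    lra.
  - rewrite Kf_big by lra. nra.
Qed.

Lemma g_mono v v' : 0 <= v <= v' -> v' <= 1 -> g v <= g v'.
Proof.
  intros Hv Hv'. apply g_lub; [lra|].
  intros y [u [Hu ->]].
  assert (u * v' - Kf sigma u <= g v') by (apply g_ub; [lra|]; exists u; auto).
  nra.
Qed.

Definition T (v : R) := sqrt (2 * ln (2 / v)).

Lemma g_lower v : 0 < v <= 1 -> (v / 2) * exp (- (sigma ^ 2 / 2 + sigma * T v)) <= g v.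
Proof.
  intros Hv. set (c := sigma ^ 2 / 2 + sigma * T v).
  apply Rle_trans with (exp (- c) * v - Kf sigma (exp (- c))).
  2:{ apply g_ub; [lra|]. exists (exp (-c)). split; [left; apply exp_pos| reflexivity]. }
  assert (Hln : 0 <= ln (2 / v)).
  { rewrite <- ln_1. apply ln_le; [lra|]. apply (Rmult_le_reg_r v); [lra|].
    field_simplify; lra. }
  unfold Kf. destruct (Rle_dec (exp (-c)) 0) as [H|H]; [pose proof (exp_pos (-c)); lra|].
  unfold beta, pos_part. rewrite exp_Ropp, Rinv_inv, ln_exp.
  unfold c. replace (sigma ^ 2 / 2 + sigma * T v - sigma ^ 2 / 2) with (sigma * T v) by ring.
  assert (HT : 0 <= T v) by apply sqrt_pos.
  rewrite Rmax_left by nra.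
  replace (- (sigma * T v) ^ 2 / (2 * sigma ^ 2)) with (- (T v * T v) / 2) by (field; lra).
  unfold T. rewrite sqrt_sqrt by lra. fold (T v).
  replace (- (2 * ln (2 / v)) / 2) with (- ln (2 / v)) by field.
  rewrite exp_Ropp, exp_ln by (apply Rdiv_lt_0_compat; lra).
  rewrite <- exp_Ropp. fold c. field_simplify; [|lra]. 
  right. field.
Qed.


Definition clamp (a v : R) := Rmax a (Rmin v 1).

Lemma clamp_in a v : a <= 1 -> a <= clamp a v <= 1.
Proof. intros; unfold clamp, Rmax, Rmin; repeat destruct Rle_dec; lra. Qed.

Lemma clamp_id a v : a <= v <= 1 -> clamp a v = v.
Proof. intros; unfold clamp, Rmax, Rmin; repeat destruct Rle_dec; lra. Qed.

Lemma clamp_lip a v v' : a <= 1 -> Rabs (clamp a v - clamp a v') <= Rabs (v - v').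
Proof.
  intros; unfold clamp, Rmax, Rmin; repeat destruct Rle_dec;
  repeat (match goal with |- context [Rabs ?z] => 
     destruct (Rcase_abs z); [rewrite (Rabs_left z) by lra | rewrite (Rabs_right z) by lra] end); lra.
Qed.

Lemma lip_cont (phi : R -> R) z :
  (forall x y, Rabs (phi x - phi y) <= Rabs (x - y)) -> continuous phi z.
Proof.
  intros Hl. apply continuity_pt_filterlim.
  intros eps Heps. exists eps. split; [lra|].
  intros x [_ Hx]. simpl in *. unfold R_dist in *.
  eapply Rle_lt_trans; [apply Hl|exact Hx].
Qed.

Lemma g_lip_abs v v' : 0 <= v <= 1 -> 0 <= v' <= 1 -> Rabs (g v - g v') <= Rabs (v - v').
Proof.
  intros. pose proof (g_lip v v' H H0). pose proof (g_lip v' v H0 H).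
  rewrite Rabs_minus_sym in H2.
  destruct (Rcase_abs (g v - g v')); [rewrite Rabs_left by lra | rewrite Rabs_right by lra]; lra.
Qed.

Lemma g_pos v : 0 < v <= 1 -> 0 < g v.
Proof.
  intros. eapply Rlt_le_trans; [|apply g_lower; auto].
  apply Rmult_lt_0_compat; [lra| apply exp_pos].
Qed.

Definition f2 (a v : R) := / g (clamp a v).

Lemma f2_cont a z : 0 < a <= 1 -> continuous (f2 a) z.
Proof.
  intros Ha. unfold f2. apply continuous_Rinv_comp.
  - apply (lip_cont (fun v => g (clamp a v))).
    intros x y. pose proof (clamp_in a x). pose proof (clamp_in a y).
    eapply Rle_trans; [apply g_lip_abs; lra|]. apply clamp_lip; lra.
  - pose proof (clamp_in a z). pose proof (g_pos (clamp a z)). lra.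
Qed.

Lemma f2_ex a b c : 0 < a <= 1 -> ex_RInt (f2 a) b c.
Proof. intros. apply (ex_RInt_continuous (V:=R_CompleteNormedModule)). intros; now apply f2_cont. Qed.

Lemma Ff_eq a w : 0 < a <= w -> w <= 1 -> Ff sigma w = RInt (f2 a) w 1.
Proof.
  intros. unfold Ff. apply RInt_ext. intros v Hv.
  rewrite Rmin_left, Rmax_right in Hv by lra.
  unfold f2. rewrite clamp_id by lra. reflexivity.
Qed.

Lemma G_cont a : 0 < a <= 1 -> continuity (fun w => RInt (f2 a) w 1).
Proof.
  intros Ha w. apply continuity_pt_filterlim. apply (ex_derive_continuous (K:=R_AbsRing) (V:=R_NormedModule) (fun w => RInt (f2 a) w 1)).
  eexists. apply (is_derive_RInt' (f2 a) (fun w => RInt (f2 a) w 1) w 1).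
  - apply filter_forall. intros; apply (RInt_correct (V:=R_CompleteNormedModule)), f2_ex; auto.
  - apply f2_cont; auto.
Qed.


Lemma Finv_spec x : 0 < x -> (0 < Finv sigma x <= 1) /\ Ff sigma (Finv sigma x) = x.
Proof.
  intros Hx.
  set (w0 := exp (- x)).
  assert (Hw0 : 0 < w0 < 1).
  { split; [apply exp_pos|]. unfold w0. rewrite <- exp_0. apply exp_increasing. lra. }
  assert (Ha : 0 < w0 <= 1) by lra.
  set (G := fun w => RInt (f2 w0) w 1).
  assert (HG1 : G 1 = 0) by (unfold G; apply (RInt_point (V:=R_CompleteNormedModule))).
  assert (Hinv : is_RInt (fun v => / v) w0 1 (ln 1 - ln w0)).
  { apply (is_RInt_derive (V:=R_CompleteNormedModule) ln (fun v => / v)).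
    - intros v Hv. rewrite Rmin_left, Rmax_right in Hv by lra. apply is_derive_ln. lra.
    - intros v Hv. rewrite Rmin_left, Rmax_right in Hv by lra. apply continuous_Rinv. lra. }
  assert (HGw0 : x <= G w0).
  { replace x with (ln 1 - ln w0) by (rewrite ln_1; unfold w0; rewrite ln_exp; ring).
    rewrite <- (is_RInt_unique _ _ _ _ Hinv).
    apply RInt_le; [lra | eexists; exact Hinv | apply f2_ex; auto |].
    intros v Hv. unfold f2. rewrite clamp_id by lra.
    destruct (Kstar_fin v) as [_ Hg]; [lra|].
    apply Rinv_le_contravar; [apply g_pos; lra| lra]. }
  destruct (IVT_gen G w0 1 x (G_cont w0 Ha)) as [z [Hz HGz]].
  { rewrite HG1, Rmin_right, Rmax_left by lra. lra. }
  rewrite Rmin_left, Rmax_right in Hz by lra.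
  assert (Hex : exists w, (0 < w <= 1) /\ Ff sigma w = x).
  { exists z. split; [lra|]. rewrite (Ff_eq w0) by lra. exact HGz. }
  exact (epsilon_spec (inhabits 0) _ Hex).
Qed.

End S.

Lemma LambertW_spec y : 0 < y -> 0 <= LambertW y /\ LambertW y * exp (LambertW y) = y.
Proof.
  intros Hy.
  assert (Hex : exists w, 0 <= w /\ w * exp w = y).
  { destruct (IVT_gen (fun w => w * exp w) 0 y y) as [z [Hz Hfz]].
    - intro t. apply continuity_pt_mult; [apply continuity_pt_id|].
      apply derivable_continuous_pt, derivable_pt_exp.
    - assert (1 <= exp y) by (rewrite <- exp_0; apply exp_le_3 || (left; apply exp_increasing; lra)).
      rewrite Rmult_0_l. rewrite Rmin_left, Rmax_right; nra.
    - exists z. rewrite Rmin_left, Rmax_right in Hz by lra. split; [lra|exact Hfz]. }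
  exact (epsilon_spec (inhabits 0) _ Hex).
Qed.
Lemma dP sigma c0 v : 0 < sigma -> 0 < v <= 1 ->
  is_derive (fun v => - (c0 * (exp (sigma * sqrt (2 * ln (2 / v))) * (sqrt (2 * ln (2 / v)) / sigma - 1 / sigma ^ 2)))) v
    (c0 * exp (sigma * sqrt (2 * ln (2 / v))) / v).
Proof.
  intros hs hv.
  assert (Hl : 0 < ln (2 * / v)).
  { rewrite <- ln_1. apply ln_increasing; [lra|]. apply (Rmult_lt_reg_r v); [lra|].
    rewrite Rmult_assoc, Rinv_l; lra. }
  auto_derive.
  - repeat split; try lra; apply Rmult_lt_0_compat; try lra; apply Rinv_0_lt_compat; lra.
  - assert (0 < sqrt (2 * ln (2 * / v))) by (apply sqrt_lt_R0; lra).
    unfold Rdiv. field. lra.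
Qed.

Theorem lemma54 (sigma : R) (hsigma : 0 < sigma) (x : R) (hx : 0 < x) :
  Finv sigma x <=
  2 * exp (- (1 / (2 * sigma ^ 2)) *
           (LambertW (x * sigma ^ 2 / (2 * exp (sigma ^ 2 / 2)))) ^ 2).
Proof.
  destruct (Finv_spec sigma hsigma x hx) as [Hw HF].
  set (w := Finv sigma x) in *.
  set (y := x * sigma ^ 2 / (2 * exp (sigma ^ 2 / 2))).
  assert (Hy : 0 < y).
  { unfold y. pose proof (exp_pos (sigma ^ 2 / 2)).
    apply Rdiv_lt_0_compat; [apply Rmult_lt_0_compat; [lra| apply pow_lt; lra]|lra]. }
  destruct (LambertW_spec y Hy) as [HW0 HWe].
  set (W := LambertW y) in *.
  set (B := 2 * exp (- (1 / (2 * sigma ^ 2)) * W ^ 2)).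
  destruct (Rle_lt_dec 1 B) as [HB1|HB1]; [lra|].
  assert (HB0 : 0 < B) by (unfold B; pose proof (exp_pos (- (1 / (2 * sigma ^ 2)) * W ^ 2)); lra).
  apply Rnot_lt_le; intro HBw.
  assert (Hs2 : 0 < sigma ^ 2) by (apply pow_lt; lra).
  assert (HTB : T B = W / sigma).
  { unfold T. replace (2 / B) with (exp ((1 / (2 * sigma ^ 2)) * W ^ 2)).
    2:{ unfold B. rewrite Ropp_mult_distr_l_reverse, exp_Ropp. field.
        pose proof (exp_pos ((1 / (2 * sigma ^ 2)) * W ^ 2)). lra. }
    rewrite ln_exp. replace (2 * (1 / (2 * sigma ^ 2) * W ^ 2)) with ((W / sigma) ^ 2) by (field; lra).
    apply sqrt_pow2. apply Rdiv_le_0_compat; lra. }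
  set (c0 := 2 * exp (sigma ^ 2 / 2)).
  assert (Hc0 : 0 < c0) by (unfold c0; pose proof (exp_pos (sigma ^ 2 / 2)); lra).
  set (h := fun v => c0 * exp (sigma * sqrt (2 * ln (2 / v))) / v).
  set (P := fun v => exp (sigma * sqrt (2 * ln (2 / v))) * (sqrt (2 * ln (2 / v)) / sigma - 1 / sigma ^ 2)).
  assert (Hh : is_RInt h B 1 (c0 * (P B - P 1))).
  { replace (c0 * (P B - P 1)) with (minus (- (c0 * P 1)) (- (c0 * P B))).
    2:{ unfold minus, plus, opp; simpl. ring. }
    apply (is_RInt_derive (V:=R_CompleteNormedModule) (fun v => - (c0 * P v)) h).
    - intros v Hv. rewrite Rmin_left, Rmax_right in Hv by lra. unfold P, h. apply dP; lra.
    - intros v Hv. rewrite Rmin_left, Rmax_right in Hv by lra.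
      apply (ex_derive_continuous (K:=R_AbsRing) (V:=R_NormedModule)).
      assert (Hl : 0 < ln (2 * / v)).
      { rewrite <- ln_1. apply ln_increasing; [lra|]. apply (Rmult_lt_reg_r v); [lra|].
        rewrite Rmult_assoc, Rinv_l; lra. }
      unfold h. auto_derive.
      repeat split; try lra; apply Rmult_lt_0_compat; try lra; apply Rinv_0_lt_compat; lra. }
  assert (Hup : RInt (f2 sigma B) B 1 <= c0 * (P B - P 1)).
  { rewrite <- (is_RInt_unique _ _ _ _ Hh).
    apply RInt_le; [lra| apply f2_ex; lra | eexists; exact Hh |].
    intros v Hv. unfold f2. rewrite clamp_id by lra.
    pose proof (g_lower sigma hsigma v ltac:(lra)) as Hgl.
    assert (Hpos : 0 < v / 2 * exp (- (sigma ^ 2 / 2 + sigma * T v))).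
    { pose proof (exp_pos (- (sigma ^ 2 / 2 + sigma * T v))). apply Rmult_lt_0_compat; lra. }
    eapply Rle_trans; [apply Rinv_le_contravar; [exact Hpos| exact Hgl]|].
    right. unfold h, T. rewrite exp_Ropp, exp_plus. unfold c0.
    pose proof (exp_pos (sigma ^ 2 / 2)). pose proof (exp_pos (sigma * sqrt (2 * ln (2 / v)))).
    field. lra. }
  assert (HPB : c0 * (P B - P 1) <= x).
  { set (t1 := sqrt (2 * ln (2 / 1))).
    assert (Ht1 : 0 <= t1) by apply sqrt_pos.
    assert (Ht1B : t1 <= W / sigma).
    { rewrite <- HTB. unfold t1, T. apply sqrt_le_1_alt. apply Rmult_le_compat_l; [lra|].
      apply ln_le; [lra|]. apply Rmult_le_compat_l; [lra|]. apply Rinv_le_contravar; lra. }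
    assert (HsW : sigma * (W / sigma) = W) by (field; lra).
    assert (He : exp (sigma * t1) <= exp W).
    { rewrite <- HsW. destruct (Req_dec t1 (W / sigma)) as [->|]; [lra|].
      left. apply exp_increasing. apply Rmult_lt_compat_l; lra. }
    assert (HP1 : - P 1 <= exp W / sigma ^ 2).
    { unfold P. fold t1. pose proof (exp_pos (sigma * t1)).
      assert (0 <= exp (sigma * t1) * t1 / sigma) by (apply Rdiv_le_0_compat; nra).
      replace (- (exp (sigma * t1) * (t1 / sigma - 1 / sigma ^ 2))) with
        (exp (sigma * t1) / sigma ^ 2 - exp (sigma * t1) * t1 / sigma) by (field; lra).
      assert (exp (sigma * t1) / sigma ^ 2 <= exp W / sigma ^ 2).
      { unfold Rdiv. apply Rmult_le_compat_r; [left; apply Rinv_0_lt_compat; lra| exact He]. }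
      lra. }
    assert (HPBv : P B = exp W * (W / sigma ^ 2 - 1 / sigma ^ 2)).
    { unfold P. fold (T B). rewrite HTB, HsW. f_equal. field. lra. }
    assert (P B - P 1 <= W * exp W / sigma ^ 2).
    { rewrite HPBv. replace (exp W * (W / sigma ^ 2 - 1 / sigma ^ 2)) with
        (W * exp W / sigma ^ 2 - exp W / sigma ^ 2) by (field; lra). lra. }
    rewrite HWe in H.
    apply Rle_trans with (c0 * (y / sigma ^ 2)); [apply Rmult_le_compat_l; [lra | exact H]|].
    right. unfold y, c0. pose proof (exp_pos (sigma ^ 2 / 2)). field. repeat split; lra. }
  assert (Hlow : w - B <= RInt (f2 sigma B) B w).
  { assert (RInt (fun _ => 1) B w = w - B).
    { rewrite (RInt_const (V:=R_CompleteNormedModule)). unfold scal; simpl. unfold mult; simpl. ring. }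
    rewrite <- H.
    apply RInt_le; [lra | apply (ex_RInt_const (V:=R_CompleteNormedModule)) | apply f2_ex; lra |].
    intros v Hv. unfold f2. rewrite clamp_id by lra.
    destruct (Kstar_fin sigma hsigma v) as [_ Hg]; [lra|].
    pose proof (g_pos sigma hsigma v ltac:(lra)).
    rewrite <- Rinv_1. apply Rinv_le_contravar; lra. }
  assert (HChas : RInt (f2 sigma B) B w + RInt (f2 sigma B) w 1 = RInt (f2 sigma B) B 1).
  { apply (RInt_Chasles (V:=R_CompleteNormedModule)); apply f2_ex; lra. }
  rewrite <- (Ff_eq sigma B w) in HChas by lra. rewrite HF in HChas.
  lra.
Qed.
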